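(* Let $N\ge 3$, $h=1/N$, $\tau>0$, $\eta>0$, $\sigma\in\mathbb{R}$, and let $\mathbf{X}^m=(x^m,y^m)^T\in\mathbb{X}^h$ and $\kappa^m\in\mathbb{K}^h$ be given. Let $\widetilde{\mathbf{X}}^{m+1/2}\in\mathbb{X}^h$ be the predicted curve (obtained from $\mathbf{X}^m$ by one step of the ZJB scheme with time step $\tau/2$), let $\widetilde{\mathbf{h}}^{m+1/2}_j=\widetilde{\mathbf{X}}^{m+1/2}(\rho_j)-\widetilde{\mathbf{X}}^{m+1/2}(\rho_{j-1})$ for $j=1,\dots,N$, and let $\widetilde{\mathbf{n}}^{m+1/2}_j=(\widetilde n^{m+1/2}_{j,1},\widetilde n^{m+1/2}_{j,2})^T$ be the unit normal of $\widetilde{\mathbf{X}}^{m+1/2}$ on $I_j$. Assume (i) $(\widetilde n^{m+1/2}_{1,1})^2+(\widetilde n^{m+1/2}_{N,1})^2>0$, and (ii) $\min_{1\le j\le N}|\widetilde{\mathbf{h}}^{m+1/2}_j|>0$. Then the linear system (PC-ZJB scheme): find $\mathbf{X}^{m+1}=(x^{m+1},y^{m+1})^T\in\mathbb{X}^h$ and $\kappa^{m+1}\in\mathbb{K}^h$ such that $$\Big\langle \tfrac{\mathbf{X}^{m+1}-\mathbf{X}^m}{\tau},\widetilde{\mathbf{n}}^{m+1/2}\psi^h\Big\rangle^h_{\widetilde\Gamma^{m+1/2}}+\Big\langle \partial_s\big(\tfrac{\kappa^{m+1}+\kappa^m}{2}\big),\partial_s\psi^h\Big\rangle_{\widetilde\Gamma^{m+1/2}}=0\quad\forall\psi^h\in\mathbb{K}^h,$$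 $$\Big\langle \tfrac{\kappa^{m+1}+\kappa^m}{2}\widetilde{\mathbf{n}}^{m+1/2},\boldsymbol\omega^h\Big\rangle^h_{\widetilde\Gamma^{m+1/2}}-\Big\langle \partial_s\big(\tfrac{\mathbf{X}^{m+1}+\mathbf{X}^m}{2}\big),\partial_s\boldsymbol\omega^h\Big\rangle_{\widetilde\Gamma^{m+1/2}}+\sigma[\omega^h_1(1)-\omega^h_1(0)]$$ $$-\frac{1}{\eta\tau}\Big[\big(x^{m+1}(0)-x^m(0)\big)\omega_1^h(0)+\big(x^{m+1}(1)-x^m(1)\big)\omega_1^h(1)\Big]=0\quad\forall\boldsymbol\omega^h=(\omega^h_1,\omega^h_2)^T\in\mathbb{X}^h,$$ is well-posed, i.e., it has a unique solution $(\mathbf{X}^{m+1},\kappa^{m+1})\in\mathbb{X}^h\times\mathbb{K}^h$.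
   Context: Mesh: $\rho_j=jh$, $j=0,\dots,N$, $I_j=[\rho_{j-1},\rho_j]$. $\mathbb{K}^h$ is the space of continuous functions on $[0,1]$ that are affine on each $I_j$; $\mathbb{K}^h_0=\{\psi\in\mathbb{K}^h:\psi(0)=\psi(1)=0\}$; $\mathbb{X}^h=\mathbb{K}^h\times\mathbb{K}^h_0$ (polygonal open curves with both endpoints on the $x$-axis). For a curve $\mathbf{Y}\in\mathbb{X}^h$ with $\mathbf{h}_j=\mathbf{Y}(\rho_j)-\mathbf{Y}(\rho_{j-1})\neq 0$, define on $I_j$: the unit normal $\mathbf{n}|_{I_j}=\big(-(\mathbf{h}_j)_2,(\mathbf{h}_j)_1\big)^T/|\mathbf{h}_j|$ and the arc-length derivative $\partial_s f|_{I_j}=h\,\partial_\rho f|_{I_j}/|\mathbf{h}_j|$. Inner products on $\mathbf{Y}$: $\langle u,v\rangle_{\mathbf{Y}}=\int_0^1 u\cdot v\,|\partial_\rho\mathbf{Y}|\,d\rho$, and the mass-lumped product $\langle u,v\rangle^h_{\mathbf{Y}}=\frac12\sum_{j=1}^N|\mathbf{h}_j|\big[(u\cdot v)(\rho_j^-)+(u\cdot v)(\rho_{j-1}^+)\big]$, where $u(\rho_j^\pm)$ are one-sided limits. $\widetilde\Gamma^{m+1/2}$ denotes the curve $\widetilde{\mathbf{X}}^{m+1/2}$ and all normals/derivatives/inner products with subscript $\widetilde\Gamma^{m+1/2}$ are taken with respect to it. The ZJB scheme with step $\delta$ from $\mathbf{X}^m$ (with normal $\mathbf{n}^m$ of $\Gamma^m=\mathbf{X}^m$)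 finds $(\mathbf{X}^{new},\kappa^{new})\in\mathbb{X}^h\times\mathbb{K}^h$ with $\langle(\mathbf{X}^{new}-\mathbf{X}^m)/\delta,\mathbf{n}^m\psi\rangle^h_{\Gamma^m}+\langle\partial_s\kappa^{new},\partial_s\psi\rangle_{\Gamma^m}=0$ for all $\psi\in\mathbb{K}^h$ and $\langle\kappa^{new}\mathbf{n}^m,\boldsymbol\omega\rangle^h_{\Gamma^m}-\langle\partial_s\mathbf{X}^{new},\partial_s\boldsymbol\omega\rangle_{\Gamma^m}-\frac{1}{\eta\delta}[(x^{new}(0)-x^m(0))\omega_1(0)+(x^{new}(1)-x^m(1))\omega_1(1)]+\sigma[\omega_1(1)-\omega_1(0)]=0$ for all $\boldsymbol\omega\in\mathbb{X}^h$. This models solid-state dewetting (surface diffusion of an open curve with contact points moving on the substrate, $\eta$ the contact line mobility, $\sigma=\cos\theta_i$ with Young angle $\theta_i$). *)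

(* Defs.v *)
(* A function of K^h is
   identified with its vector of nodal values f(rho_0), ..., f(rho_N),
   i.e. an element of {ffun 'I_N.+1 -> R}.  Edges are indexed by nat:
   edge j (0 <= j < N) is the interval I_{j+1} = [rho_j, rho_{j+1}]. *)
From mathcomp Require Import all_boot all_order all_algebra.
Set Implicit Arguments. Unset Strict Implicit. Unset Printing Implicit Defensive.
Import Order.TTheory GRing.Theory Num.Theory.
Local Open Scope ring_scope.

Section PCZJB.
Variable R : rcfType.
Variable N : nat.

Definition P1 := {ffun 'I_N.+1 -> R}.

Definition nd (j : nat) : 'I_N.+1 := inord j.

Definition hmesh : R := (N%:R)^-1.

Definition K0 (f : P1) : Prop := f (nd 0) = 0 /\ f (nd N) = 0.

Definition edx (f : P1) (j : nat) : R := f (nd j.+1) - f (nd j).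

Definition elen (x y : P1) (j : nat) : R :=
  Num.sqrt (edx x j ^+ 2 + edx y j ^+ 2).

Definition nrm1 (x y : P1) (j : nat) : R := - edx y j / elen x y j.
Definition nrm2 (x y : P1) (j : nat) : R := edx x j / elen x y j.

(* arc-length derivative  d_s f = h d_rho f / |h_j|  on edge j,
   with d_rho f = (f(rho_{j+1}) - f(rho_j)) / h *)
Definition ds (x y : P1) (f : P1) (j : nat) : R :=
  hmesh * (edx f j / hmesh) / elen x y j.

(* <d_s u, d_s v>_Y = int_0^1 d_s u d_s v |d_rho Y| drho ; the integrand is
   constant on each I_j (length h), with |d_rho Y| = |h_j| / h there. *)
Definition ip_grad (x y : P1) (u v : P1) : R :=
  \sum_(j < N) hmesh * (ds x y u j * ds x y v j) * (elen x y j / hmesh).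

(* mass-lumped product  1/2 sum_j |h_j| [ (u.v)(rho_j^-) + (u.v)(rho_{j-1}^+) ];
   g j k is the value of the (pointwise) product u.v at node k computed with
   the piecewise constant data of edge j (i.e. the one-sided limit from the
   interior of edge j). *)
Definition ip_lump (x y : P1) (g : nat -> 'I_N.+1 -> R) : R :=
  2^-1 * \sum_(j < N) elen x y j * (g j (nd j.+1) + g j (nd j)).

Definition ZJB (eta sigma delta : R) (xm ym xn yn kn : P1) : Prop :=
  K0 yn /\
  (forall psi : P1,
     ip_lump xm ym (fun j k =>
        ((xn k - xm k) / delta * nrm1 xm ym j
         + (yn k - ym k) / delta * nrm2 xm ym j) * psi k)
     + ip_grad xm ym kn psi = 0) /\
  (forall w1 w2 : P1, K0 w2 ->
     ip_lump xm ym (fun j k => kn k * (nrm1 xm ym j * w1 k + nrm2 xm ym j * w2 k))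
     - (ip_grad xm ym xn w1 + ip_grad xm ym yn w2)
     - (eta * delta)^-1 * ((xn (nd 0) - xm (nd 0)) * w1 (nd 0)
                           + (xn (nd N) - xm (nd N)) * w1 (nd N))
     + sigma * (w1 (nd N) - w1 (nd 0)) = 0).

Definition avg (f g : P1) : P1 := [ffun k => (f k + g k) / 2].

Definition PCZJB (eta sigma tau : R) (xm ym km xt yt x1 y1 k1 : P1) : Prop :=
  K0 y1 /\
  (forall psi : P1,
     ip_lump xt yt (fun j k =>
        ((x1 k - xm k) / tau * nrm1 xt yt j
         + (y1 k - ym k) / tau * nrm2 xt yt j) * psi k)
     + ip_grad xt yt (avg k1 km) psi = 0) /\
  (forall w1 w2 : P1, K0 w2 ->
     ip_lump xt yt (fun j k =>
        avg k1 km k * (nrm1 xt yt j * w1 k + nrm2 xt yt j * w2 k))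
     - (ip_grad xt yt (avg x1 xm) w1 + ip_grad xt yt (avg y1 ym) w2)
     + sigma * (w1 (nd N) - w1 (nd 0))
     - (eta * tau)^-1 * ((x1 (nd 0) - xm (nd 0)) * w1 (nd 0)
                         + (x1 (nd N) - xm (nd N)) * w1 (nd N)) = 0).

End PCZJB.

(* Main.v *)
Require Import Defs.
From mathcomp Require Import all_boot all_order all_algebra.
From mathcomp Require Import ring lra.
Set Implicit Arguments. Unset Strict Implicit. Unset Printing Implicit Defensive.
Import Order.TTheory GRing.Theory Num.Theory.
Local Open Scope ring_scope.

Section Main.
Variable R : rcfType.
Variable N : nat.
Local Notation P := (P1 R N).
Local Notation nd := (nd N).
Variables (xt yt : P) (tau eta : R).
Hypothesis hN : (0 < N)%N.
Hypothesis hL : forall j, (j < N)%N -> 0 < elen xt yt j.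

Definition lc (a : R) (u v : P) : P := [ffun k => a * u k + v k].
Definition dlt (i : 'I_N.+1) : P := [ffun k => (k == i)%:R].
Definition z : P := [ffun => 0].

Lemma lc_zz a : lc a z z = z.
Proof. by apply/ffunP => k; rewrite !ffunE mulr0 addr0. Qed.
Lemma lc1l u : lc 1 u z = u.
Proof. by apply/ffunP => k; rewrite !ffunE mul1r addr0. Qed.
Lemma lc1r u : lc 1 z u = u.
Proof. by apply/ffunP => k; rewrite !ffunE mulr0 add0r. Qed.

Definition E1 (xm ym km x1 y1 k1 psi : P) : R :=
  ip_lump xt yt (fun j k =>
        ((x1 k - xm k) / tau * nrm1 xt yt j
         + (y1 k - ym k) / tau * nrm2 xt yt j) * psi k)
     + ip_grad xt yt (avg k1 km) psi.

Definition E2 (sigma : R) (xm ym km x1 y1 k1 w1 w2 : P) : R :=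
     ip_lump xt yt (fun j k =>
        avg k1 km k * (nrm1 xt yt j * w1 k + nrm2 xt yt j * w2 k))
     - (ip_grad xt yt (avg x1 xm) w1 + ip_grad xt yt (avg y1 ym) w2)
     + sigma * (w1 (nd N) - w1 (nd 0))
     - (eta * tau)^-1 * ((x1 (nd 0) - xm (nd 0)) * w1 (nd 0)
                         + (x1 (nd N) - xm (nd N)) * w1 (nd N)).

Lemma PCZJB_E sigma xm ym km x1 y1 k1 :
  PCZJB eta sigma tau xm ym km xt yt x1 y1 k1 <->
  [/\ K0 y1, (forall psi, E1 xm ym km x1 y1 k1 psi = 0) &
     (forall w1 w2, K0 w2 -> E2 sigma xm ym km x1 y1 k1 w1 w2 = 0)].
Proof. by split => [[? [? ?]]|[? ? ?]]. Qed.

Lemma hmesh_neq0 : hmesh R N != 0.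
Proof. by rewrite /hmesh invr_eq0 pnatr_eq0 -lt0n. Qed.

Lemma grad_nf u v : ip_grad xt yt u v =
  \sum_(j < N) edx u j * edx v j / elen xt yt j.
Proof.
apply: eq_bigr => j _; rewrite /ds.
have hl : elen xt yt j != 0 by rewrite gt_eqF // hL.
have hh := hmesh_neq0.
by field; rewrite hl hh.
Qed.

Definition G1 (xm ym x1 y1 psi : P) (j : nat) (k : 'I_N.+1) : R :=
  ((x1 k - xm k) / tau * nrm1 xt yt j + (y1 k - ym k) / tau * nrm2 xt yt j) * psi k.

Definition e1 (xm ym km x1 y1 k1 psi : P) (j : nat) : R :=
  2^-1 * (elen xt yt j * (G1 xm ym x1 y1 psi j (nd j.+1) + G1 xm ym x1 y1 psi j (nd j)))
  + edx (avg k1 km) j * edx psi j / elen xt yt j.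

Lemma E1_nf xm ym km x1 y1 k1 psi :
  E1 xm ym km x1 y1 k1 psi = \sum_(j < N) e1 xm ym km x1 y1 k1 psi j.
Proof. by rewrite /E1 grad_nf /ip_lump mulr_sumr -big_split. Qed.

Definition G2 (km k1 w1 w2 : P) (j : nat) (k : 'I_N.+1) : R :=
  avg k1 km k * (nrm1 xt yt j * w1 k + nrm2 xt yt j * w2 k).

Definition e2 (xm ym km x1 y1 k1 w1 w2 : P) (j : nat) : R :=
  2^-1 * (elen xt yt j * (G2 km k1 w1 w2 j (nd j.+1) + G2 km k1 w1 w2 j (nd j)))
  - (edx (avg x1 xm) j * edx w1 j / elen xt yt j
     + edx (avg y1 ym) j * edx w2 j / elen xt yt j).

Definition bd (sigma : R) (xm x1 w1 : P) : R :=
  sigma * (w1 (nd N) - w1 (nd 0))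
     - (eta * tau)^-1 * ((x1 (nd 0) - xm (nd 0)) * w1 (nd 0)
                         + (x1 (nd N) - xm (nd N)) * w1 (nd N)).

Lemma E2_nf sigma xm ym km x1 y1 k1 w1 w2 :
  E2 sigma xm ym km x1 y1 k1 w1 w2 =
  \sum_(j < N) e2 xm ym km x1 y1 k1 w1 w2 j + bd sigma xm x1 w1.
Proof.
rewrite /E2 /bd !grad_nf /ip_lump mulr_sumr -big_split -sumrB /=.
by rewrite -!addrA.
Qed.

Lemma sum_lin (a : R) (F G H : nat -> R) :
  (forall j, (j < N)%N -> F j = a * G j + H j) ->
  \sum_(j < N) F j = a * \sum_(j < N) G j + \sum_(j < N) H j.
Proof. by move=> h; rewrite mulr_sumr -big_split; apply: eq_bigr => j _; rewrite h. Qed.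


Lemma E1_tlin xm ym km x1 y1 k1 a u v :
  E1 xm ym km x1 y1 k1 (lc a u v) =
  a * E1 xm ym km x1 y1 k1 u + E1 xm ym km x1 y1 k1 v.
Proof.
rewrite !E1_nf; apply: sum_lin => j _.
rewrite /e1 /G1 /edx /avg /lc !ffunE; ring.
Qed.

Lemma E2_tlin sigma xm ym km x1 y1 k1 a u1 v1 u2 v2 :
  E2 sigma xm ym km x1 y1 k1 (lc a u1 v1) (lc a u2 v2) =
  a * E2 sigma xm ym km x1 y1 k1 u1 u2 + E2 sigma xm ym km x1 y1 k1 v1 v2.
Proof.
rewrite !E2_nf (@sum_lin a _ (e2 xm ym km x1 y1 k1 u1 u2) (e2 xm ym km x1 y1 k1 v1 v2)).
  by rewrite /bd /lc !ffunE; ring.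
move=> j _; rewrite /e2 /G2 /edx /avg /lc !ffunE; ring.
Qed.

Lemma E1_dlin a xm ym km x1 y1 k1 xm' ym' km' x1' y1' k1' psi :
  E1 (lc a xm xm') (lc a ym ym') (lc a km km') (lc a x1 x1') (lc a y1 y1') (lc a k1 k1') psi =
  a * E1 xm ym km x1 y1 k1 psi + E1 xm' ym' km' x1' y1' k1' psi.
Proof.
rewrite !E1_nf; apply: sum_lin => j _.
rewrite /e1 /G1 /edx /avg /lc !ffunE; ring.
Qed.

Lemma E2_dlin a sigma sigma' xm ym km x1 y1 k1 xm' ym' km' x1' y1' k1' w1 w2 :
  E2 (a * sigma + sigma') (lc a xm xm') (lc a ym ym') (lc a km km') (lc a x1 x1') (lc a y1 y1') (lc a k1 k1') w1 w2 =
  a * E2 sigma xm ym km x1 y1 k1 w1 w2 + E2 sigma' xm' ym' km' x1' y1' k1' w1 w2.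
Proof.
rewrite !E2_nf (@sum_lin a _ (e2 xm ym km x1 y1 k1 w1 w2) (e2 xm' ym' km' x1' y1' k1' w1 w2)).
  by rewrite /bd /lc !ffunE; ring.
move=> j _; rewrite /e2 /G2 /edx /avg /lc !ffunE; ring.
Qed.

Lemma expand (F : P -> R) :
  (forall a u v, F (lc a u v) = a * F u + F v) ->
  forall psi, F psi = \sum_(k < N.+1) psi k * F (dlt k).
Proof.
move=> Fl psi.
have F0 : F z = 0.
  have := Fl 1 z z; rewrite lc_zz mul1r => /(congr1 (fun x => x - F z)).
  by rewrite subrr addrK.
have gen : forall r : seq 'I_N.+1,
    F [ffun t => \sum_(k <- r) psi k * dlt k t] = \sum_(k <- r) psi k * F (dlt k).
  elim=> [|k r IH].
    rewrite big_nil -F0; apply: (congr1 F); apply/ffunP => t; by rewrite !ffunE big_nil.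
  rewrite big_cons -IH -Fl; apply: (congr1 F); apply/ffunP => t; by rewrite !ffunE big_cons ffunE.
rewrite -gen; apply: (congr1 F); apply/ffunP => t; rewrite ffunE (bigD1 t) //= ffunE eqxx mulr1.
rewrite big1 ?addr0 // => k hk; by rewrite ffunE eq_sym (negbTE hk) mulr0.
Qed.


Definition i0 : 'I_3 := @Ordinal 3 0 isT.
Definition i1 : 'I_3 := @Ordinal 3 1 isT.
Definition i2 : 'I_3 := @Ordinal 3 2 isT.
Definition rw (M : 'M[R]_(3, N.+1)) (i : 'I_3) : P := [ffun k => M i k].

Definition Phi sigma xm ym km (M : 'M[R]_(3, N.+1)) : 'M[R]_(3, N.+1) :=
  \matrix_(i < 3, k < N.+1)
   if val i == 0%N then E1 xm ym km (rw M i0) (rw M i1) (rw M i2) (dlt k)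
   else if val i == 1%N then E2 sigma xm ym km (rw M i0) (rw M i1) (rw M i2) (dlt k) z
   else if (k == nd 0) || (k == nd N) then M i1 k
   else E2 sigma xm ym km (rw M i0) (rw M i1) (rw M i2) z (dlt k).

Lemma rw_lin a M M' i : rw (a *: M + M') i = lc a (rw M i) (rw M' i).
Proof. by apply/ffunP => k; rewrite !ffunE !mxE. Qed.

Lemma Phi_lin a sigma sigma' xm ym km xm' ym' km' M M' :
  Phi (a * sigma + sigma') (lc a xm xm') (lc a ym ym') (lc a km km') (a *: M + M') =
  a *: Phi sigma xm ym km M + Phi sigma' xm' ym' km' M'.
Proof.
apply/matrixP => i k; rewrite /Phi !mxE !rw_lin.
case: ifP => _; first by rewrite E1_dlin.
case: ifP => _; first by rewrite E2_dlin.
case: ifP => _; first by [].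
by rewrite E2_dlin.
Qed.

Definition Phi0 M := Phi 0 z z z M.

Lemma Phi0_lin a M M' : Phi0 (a *: M + M') = a *: Phi0 M + Phi0 M'.
Proof. by have := Phi_lin a 0 0 z z z z z z M M'; rewrite mulr0 addr0 lc_zz. Qed.

Lemma Phi_split sigma xm ym km M :
  Phi sigma xm ym km M = Phi0 M + Phi sigma xm ym km 0.
Proof.
by have := Phi_lin 1 0 sigma z z z xm ym km M 0; rewrite mul1r add0r !lc1r !scale1r addr0.
Qed.

Lemma A1 sigma xm ym km M : Phi sigma xm ym km M = 0 ->
  PCZJB eta sigma tau xm ym km xt yt (rw M i0) (rw M i1) (rw M i2).
Proof.
move=> hM; have ent i k : Phi sigma xm ym km M i k = 0 by rewrite hM mxE.
rewrite /Phi in ent.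
apply/PCZJB_E; split.
- split; [have := ent i2 (nd 0) | have := ent i2 (nd N)];
    rewrite mxE /= eqxx ?orbT /= => <-; by rewrite ffunE.
- move=> psi.
  rewrite (expand (E1_tlin xm ym km _ _ _) psi) big1 // => k _.
  by have := ent i0 k; rewrite mxE /= => ->; rewrite mulr0.
- move=> w1 w2 hw2.
  have -> : E2 sigma xm ym km (rw M i0) (rw M i1) (rw M i2) w1 w2 =
     E2 sigma xm ym km (rw M i0) (rw M i1) (rw M i2) w1 z +
     E2 sigma xm ym km (rw M i0) (rw M i1) (rw M i2) z w2.
    by have := E2_tlin sigma xm ym km (rw M i0) (rw M i1) (rw M i2) 1 w1 z z w2;
      rewrite lc1l lc1r mul1r.
  have l1 : forall a u v, E2 sigma xm ym km (rw M i0) (rw M i1) (rw M i2) (lc a u v) z =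
     a * E2 sigma xm ym km (rw M i0) (rw M i1) (rw M i2) u z +
     E2 sigma xm ym km (rw M i0) (rw M i1) (rw M i2) v z.
    by move=> a u v; have := E2_tlin sigma xm ym km (rw M i0) (rw M i1) (rw M i2) a u v z z;
      rewrite lc_zz.
  have l2 : forall a u v, E2 sigma xm ym km (rw M i0) (rw M i1) (rw M i2) z (lc a u v) =
     a * E2 sigma xm ym km (rw M i0) (rw M i1) (rw M i2) z u +
     E2 sigma xm ym km (rw M i0) (rw M i1) (rw M i2) z v.
    by move=> a u v; have := E2_tlin sigma xm ym km (rw M i0) (rw M i1) (rw M i2) a z z u v;
      rewrite lc_zz.
  rewrite (expand l1 w1) (expand l2 w2) !big1 ?addr0 //.
    move=> k _; case: (boolP ((k == nd 0) || (k == nd N))) => hk.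
      by case/orP: hk => /eqP ->; rewrite ?(proj1 hw2) ?(proj2 hw2) mul0r.
    by have := ent i2 k; rewrite mxE /= (negbTE hk) => ->; rewrite mulr0.
  by move=> k _; have := ent i1 k; rewrite mxE /= => ->; rewrite mulr0.
Qed.


Lemma nd_eq a b : (a <= N)%N -> (b <= N)%N -> (nd a == nd b) = (a == b).
Proof. by move=> ha hb; rewrite -val_eqE /= !inordK. Qed.

Lemma const_lem (f : P) : (forall j, (j < N)%N -> edx f j = 0) ->
  forall k, f k = f (nd 0).
Proof.
move=> h k.
suff gen : forall j, (j <= N)%N -> f (nd j) = f (nd 0).
  by rewrite -(gen k (ltn_ord k)) /Defs.nd inord_val.
elim=> [//|j IH hj].
have := h j hj; rewrite /edx => /eqP; rewrite subr_eq0 => /eqP ->.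
by apply: IH; apply: ltnW.
Qed.

Lemma dsum0 (F : nat -> R) :
  \sum_(j < N) F j * (dlt (nd 0) (nd j.+1) + dlt (nd 0) (nd j)) = F 0%N.
Proof.
rewrite (bigD1 (Ordinal hN)) //= big1 ?addr0.
  by rewrite !ffunE eqxx nd_eq // add0r mulr1.
move=> j hj.
have hj0 : (val j != 0)%N.
  by apply: contra hj => /eqP hj0; apply/eqP/val_inj.
rewrite !ffunE (nd_eq (ltn_ord j) (leq0n N)) (nd_eq (ltnW (ltn_ord j)) (leq0n N)).
by rewrite (negbTE hj0) add0r mulr0.
Qed.

Lemma dsumN (F : nat -> R) :
  \sum_(j < N) F j * (dlt (nd N) (nd j.+1) + dlt (nd N) (nd j)) = F N.-1.
Proof.
have hlt : (N.-1 < N)%N by rewrite ltn_predL.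
rewrite (bigD1 (Ordinal hlt)) //= big1 ?addr0.
  rewrite !ffunE nd_eq ?prednK // eqxx nd_eq ?(ltnW hlt) //.
  by rewrite ltn_eqF // addr0 mulr1.
move=> j hj.
have hj0 : (val j != N.-1)%N.
  by apply: contra hj => /eqP hj0; apply/eqP/val_inj.
rewrite !ffunE (nd_eq (ltn_ord j) (leqnn N)) (nd_eq (ltnW (ltn_ord j)) (leqnn N)).
rewrite (ltn_eqF (ltn_ord j)).
have -> : (j.+1 == N) = false.
  apply/negbTE/eqP => hjN; move/eqP: hj0; apply; by rewrite -[in RHS]hjN.
by rewrite add0r mulr0.
Qed.

Lemma sum_comb (c : R) (F1 F2 G1 G2 H : nat -> R) :
  (forall j, (j < N)%N -> c * (F1 j - F2 j) - (G1 j - G2 j) = H j) ->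
  c * (\sum_(j < N) F1 j - \sum_(j < N) F2 j) - (\sum_(j < N) G1 j - \sum_(j < N) G2 j)
  = \sum_(j < N) H j.
Proof.
move=> h; rewrite -!sumrB mulr_sumr -sumrB; apply: eq_bigr => j _; exact: h.
Qed.

Lemma sq_div_eq0 (a l : R) : 0 < l -> a ^+ 2 / l = 0 -> a = 0.
Proof.
move=> hl /eqP; rewrite mulf_eq0 invr_eq0 (gt_eqF hl) orbF sqrf_eq0 => /eqP //.
Qed.

Lemma sq_div_ge0 (a l : R) : 0 < l -> 0 <= a ^+ 2 / l.
Proof. by move=> hl; rewrite divr_ge0 ?sqr_ge0 // ltW. Qed.


Hypothesis htau : 0 < tau.
Hypothesis heta : 0 < eta.
Hypothesis hi : 0 < nrm1 xt yt 0 ^+ 2 + nrm1 xt yt N.-1 ^+ 2.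

Lemma uniq_sol sigma xm ym km x1 y1 k1 x2 y2 k2 :
  PCZJB eta sigma tau xm ym km xt yt x1 y1 k1 ->
  PCZJB eta sigma tau xm ym km xt yt x2 y2 k2 ->
  [/\ x1 = x2, y1 = y2 & k1 = k2].
Proof.
move=> /PCZJB_E [hy1 h11 h12] /PCZJB_E [hy2 h21 h22].
pose K : P := [ffun k => k1 k - k2 k].
pose X : P := [ffun k => x1 k - x2 k].
pose Y : P := [ffun k => y1 k - y2 k].
have hY : K0 Y.
  by split; rewrite ffunE ?(proj1 hy1) ?(proj1 hy2) ?(proj2 hy1) ?(proj2 hy2) subrr.
pose q j := tau / 4 * (edx K j ^+ 2 / elen xt yt j) + (edx X j ^+ 2 / elen xt yt j) / 2
   + (edx Y j ^+ 2 / elen xt yt j) / 2.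
have key : tau / 2 * (E1 xm ym km x1 y1 k1 K - E1 xm ym km x2 y2 k2 K)
   - (E2 sigma xm ym km x1 y1 k1 X Y - E2 sigma xm ym km x2 y2 k2 X Y)
   = \sum_(j < N) q j + (eta * tau)^-1 * (X (nd 0) ^+ 2 + X (nd N) ^+ 2).
  rewrite !E1_nf !E2_nf.
  have e : forall a b c d : R, (a + b) - (c + d) = (a - c) + (b - d) by move=> *; ring.
  rewrite e opprD addrA (sum_comb (H := q)).
    by rewrite /bd !ffunE; congr (_ + _); ring.
  move=> j hj; rewrite /q /e1 /e2 /G1 /G2 /edx /avg !ffunE.
  have hl : elen xt yt j != 0 by rewrite gt_eqF // hL.
  have ht : tau != 0 by rewrite gt_eqF.
  by field; rewrite hl ht.
have hq : forall j, (j < N)%N -> 0 <= q j.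
  move=> j hj; rewrite /q.
  have := sq_div_ge0 (edx K j) (hL hj); have := sq_div_ge0 (edx X j) (hL hj);
  have := sq_div_ge0 (edx Y j) (hL hj).
  have : 0 <= tau / 4 by rewrite divr_ge0 // ltW.
  move=> a b c d; have := mulr_ge0 a d; lra.
have hsum : 0 <= \sum_(j < N) q j by apply: sumr_ge0 => i _; apply: hq.
have hb : 0 <= (eta * tau)^-1 * (X (nd 0) ^+ 2 + X (nd N) ^+ 2).
  by rewrite mulr_ge0 ?addr_ge0 ?sqr_ge0 // invr_ge0 mulr_ge0 // ltW.
have k0 : \sum_(j < N) q j + (eta * tau)^-1 * (X (nd 0) ^+ 2 + X (nd N) ^+ 2) = 0.
  by rewrite -key h11 h21 (h12 _ _ hY) (h22 _ _ hY) !subrr mulr0 subrr.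
have hs0 : \sum_(j < N) q j = 0 by lra.
have hb0 : (eta * tau)^-1 * (X (nd 0) ^+ 2 + X (nd N) ^+ 2) = 0 by lra.
have hqj : forall j, (j < N)%N -> q j = 0.
  move=> j hj; exact: (@psumr_eq0P R _ xpredT (fun i : 'I_N => q i) (fun i _ => hq i (ltn_ord i)) hs0 (Ordinal hj) isT).
have parts : forall j, (j < N)%N ->
   [/\ edx K j = 0, edx X j = 0 & edx Y j = 0].
  move=> j hj; have := hqj j hj; rewrite /q => h0.
  have a1 := sq_div_ge0 (edx K j) (hL hj); have a2 := sq_div_ge0 (edx X j) (hL hj);
  have a3 := sq_div_ge0 (edx Y j) (hL hj).
  have a4 : 0 < tau / 4 by rewrite divr_gt0.
  have b2 : edx X j ^+ 2 / elen xt yt j = 0 by nra.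
  have b3 : edx Y j ^+ 2 / elen xt yt j = 0 by nra.
  have b1 : tau / 4 * (edx K j ^+ 2 / elen xt yt j) = 0 by nra.
  move/eqP: b1; rewrite mulf_eq0 (gt_eqF a4) /= => /eqP b1.
  split; exact: (sq_div_eq0 (hL hj)).
have hX0 : X (nd 0) = 0.
  move/eqP: hb0; rewrite mulf_eq0 invr_eq0 mulf_eq0 (gt_eqF heta) (gt_eqF htau) /= => /eqP h.
  have : X (nd 0) ^+ 2 = 0.
    have := sqr_ge0 (X (nd 0)); have := sqr_ge0 (X (nd N)); lra.
  by move/eqP; rewrite sqrf_eq0 => /eqP.
have hKd : forall j, (j < N)%N -> edx K j = 0 by move=> j hj; case: (parts j hj).
have hXd : forall j, (j < N)%N -> edx X j = 0 by move=> j hj; case: (parts j hj).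
have hYd : forall j, (j < N)%N -> edx Y j = 0 by move=> j hj; case: (parts j hj).
have ex : x1 = x2.
  apply/ffunP => k; have := const_lem hXd k.
  by rewrite hX0 ffunE => /eqP; rewrite subr_eq0 => /eqP.
have ey : y1 = y2.
  apply/ffunP => k; have := const_lem hYd k.
  by rewrite (proj1 hY) ffunE => /eqP; rewrite subr_eq0 => /eqP.
have [c hk] : exists c, forall k, k1 k = k2 k + c.
  exists (K (nd 0)) => k; have := const_lem hKd k; rewrite ffunE => <-.
  by rewrite addrC subrK.
subst x2 y2.
have test : forall i : 'I_N.+1, forall F : nat -> R,
    (forall j, (j < N)%N -> e2 xm ym km x1 y1 k1 (dlt i) z j - e2 xm ym km x1 y1 k2 (dlt i) z j
       = F j * (dlt i (nd j.+1) + dlt i (nd j))) ->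
    \sum_(j < N) F j * (dlt i (nd j.+1) + dlt i (nd j)) = 0.
  move=> i F hF.
  have := h12 (dlt i) z (conj (ffunE _ _) (ffunE _ _)).
  have := h22 (dlt i) z (conj (ffunE _ _) (ffunE _ _)).
  rewrite !E2_nf => h2 h1.
  have : \sum_(j < N) e2 xm ym km x1 y1 k1 (dlt i) z j -
         \sum_(j < N) e2 xm ym km x1 y1 k2 (dlt i) z j = 0.
    by move: h1 h2; set a := \sum_(j < N) _; set b := \sum_(j < N) _; move=> h1 h2; lra.
  rewrite -sumrB => h0; rewrite -[RHS]h0; apply: eq_bigr => j _; by rewrite hF.
pose F j := 2^-1 * elen xt yt j * (c / 2) * nrm1 xt yt j.
have hF : forall i : 'I_N.+1, forall j, (j < N)%N ->
   e2 xm ym km x1 y1 k1 (dlt i) z j - e2 xm ym km x1 y1 k2 (dlt i) z j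
       = F j * (dlt i (nd j.+1) + dlt i (nd j)).
  move=> i j hj; rewrite /e2 /G2 /avg /F !ffunE !hk; ring.
have c0 : c * nrm1 xt yt 0 = 0.
  have := test _ _ (hF (nd 0)); rewrite dsum0 => h0.
  have -> : c * nrm1 xt yt 0 = F 0%N * 4 / elen xt yt 0.
    by rewrite /F; field; rewrite gt_eqF // hL.
  by rewrite h0 !mul0r.
have cN : c * nrm1 xt yt N.-1 = 0.
  have hlt : (N.-1 < N)%N by rewrite ltn_predL.
  have := test _ _ (hF (nd N)); rewrite dsumN => h0.
  have -> : c * nrm1 xt yt N.-1 = F N.-1 * 4 / elen xt yt N.-1.
    by rewrite /F; field; rewrite gt_eqF // hL.
  by rewrite h0 !mul0r.
have cc : c = 0.
  have : c ^+ 2 * (nrm1 xt yt 0 ^+ 2 + nrm1 xt yt N.-1 ^+ 2) = 0.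
    transitivity ((c * nrm1 xt yt 0) ^+ 2 + (c * nrm1 xt yt N.-1) ^+ 2); first ring.
    by rewrite c0 cN expr0n /= addr0.
  by move/eqP; rewrite mulf_eq0 (gt_eqF hi) orbF sqrf_eq0 => /eqP.
split => //; apply/ffunP => k; by rewrite hk cc addr0.
Qed.


Definition fmap (u : 'rV[R]_(3 * N.+1)) : 'rV[R]_(3 * N.+1) := mxvec (Phi0 (vec_mx u)).

Lemma fmap_lin a u v : fmap (a *: u + v) = a *: fmap u + fmap v.
Proof. by rewrite /fmap linearP Phi0_lin linearP. Qed.

Lemma fmap0 : fmap 0 = 0.
Proof.
have := fmap_lin 1 0 0; rewrite !scale1r !addr0 => /(congr1 (fun x => x - fmap 0)).
by rewrite subrr addrK.
Qed.

Lemma fmap_sum (I : Type) (r : seq I) (c : I -> R) (e : I -> 'rV[R]_(3 * N.+1)) :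
  fmap (\sum_(i <- r) c i *: e i) = \sum_(i <- r) c i *: fmap (e i).
Proof.
elim: r => [|i r IH]; first by rewrite !big_nil fmap0.
by rewrite !big_cons -IH -fmap_lin.
Qed.

Definition Amat : 'M[R]_(3 * N.+1) := \matrix_(i, j) fmap (delta_mx 0 i) 0 j.

Lemma Amat_mul u : u *m Amat = fmap u.
Proof.
rewrite mulmx_sum_row {2}(row_sum_delta u) fmap_sum; apply: eq_bigr => i _.
by congr (_ *: _); apply/rowP => j; rewrite !mxE.
Qed.

Lemma Phi00 : Phi0 0 = 0.
Proof.
have := Phi0_lin 1 0 0; rewrite !scale1r !addr0 => /(congr1 (fun x => x - Phi0 0)).
by rewrite subrr addrK.
Qed.

Lemma fmap_inj u : fmap u = 0 -> u = 0.
Proof.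
move=> h.
have hP : Phi0 (vec_mx u) = 0.
  by have := congr1 vec_mx h; rewrite /fmap mxvecK linear0.
have s1 := A1 hP; have s2 := A1 Phi00.
case: (uniq_sol s1 s2) => e0 e1 e2.
have hv : vec_mx u = 0.
  apply/matrixP => i k.
  have : i = i0 \/ i = i1 \/ i = i2.
    case: i => [[|[|[|m]]] hm]; [left|right;left|right;right|by []]; exact: val_inj.
  case=> [->|[->|->]]; [move: (congr1 (fun f : P => f k) e0) | move: (congr1 (fun f : P => f k) e1)
     | move: (congr1 (fun f : P => f k) e2)]; by rewrite !ffunE.
by rewrite -(vec_mxK u) hv linear0.
Qed.

Lemma Amat_unit : Amat \in unitmx.
Proof.
rewrite -row_free_unit -kermx_eq0; apply/rowV0P => v /sub_kermxP.
by rewrite Amat_mul; exact: fmap_inj.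
Qed.

Lemma exist_sol sigma xm ym km : exists M, Phi sigma xm ym km M = 0.
Proof.
pose b := - mxvec (Phi sigma xm ym km 0).
pose u := b *m invmx Amat.
exists (vec_mx u); rewrite Phi_split.
have -> : Phi0 (vec_mx u) = vec_mx (fmap u) by rewrite /fmap mxvecK.
rewrite -Amat_mul mulmxKV ?Amat_unit // /b linearN.
change (- vec_mx (mxvec (Phi sigma xm ym km 0)) + Phi sigma xm ym km 0 = 0).
by rewrite mxvecK addNr.
Qed.

Lemma main_sec sigma xm ym km :
  exists! s : P * P * P, PCZJB eta sigma tau xm ym km xt yt s.1.1 s.1.2 s.2.
Proof.
have [M hM] := exist_sol sigma xm ym km.
exists ((rw M i0, rw M i1), rw M i2); split; first exact: A1.
case=> [[x y] k] /= h; case: (uniq_sol (A1 hM) h) => -> -> ->; done.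
Qed.

End Main.

Theorem theorem3p1 (R : rcfType) (N : nat) (tau eta sigma : R)
  (xm ym km xt yt : P1 R N)
  (hN : (3 <= N)%N) (htau : 0 < tau) (heta : 0 < eta)
  (hXm : K0 ym)
  (hpred : exists kt : P1 R N, ZJB eta sigma (tau / 2) xm ym xt yt kt)
  (hi : 0 < nrm1 xt yt 0 ^+ 2 + nrm1 xt yt N.-1 ^+ 2)
  (hii : forall j : nat, (j < N)%N -> 0 < elen xt yt j) :
  exists! s : P1 R N * P1 R N * P1 R N,
    PCZJB eta sigma tau xm ym km xt yt s.1.1 s.1.2 s.2.
Proof.
have hN0 : (0 < N)%N by apply: leq_trans hN.
exact: (main_sec hN0 hii htau heta hi).
Qed.
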